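(* Fix a transcript whose feasible region $\Phi_T$ is nonempty and bounded. For every function $\hat G:S^{d-1}\to\mathbb{R}$, \[ \sup_{x\in\Phi_T}\ \sup_{v\in S^{d-1}}\bigl|\hat G(v)-\langle x,v\rangle\bigr|\;\ge\;\tfrac12\,\mathrm{diam}(\Phi_T), \] with equality for the rule $\hat G(v)=\tfrac12\bigl(\sup_{x\in\Phi_T}\langle x,v\rangle+\inf_{x\in\Phi_T}\langle x,v\rangle\bigr)$. Consequently $\mathrm{OPT}^{\mathrm{improper}}_d(T,\delta)=\inf_{\mathcal R}\sup\tfrac12\mathrm{diam}(\Phi_T)$, the supremum being over all transcripts produced by $\mathcal R$ with answers chosen online arbitrarily subject to $\Phi_T\neq\emptyset$.
   Context: Improper linear reconstruction game: fix $d\ge1$, $T\ge0$, $\delta>0$. An adversary holds a secret $x^*\in\mathbb{R}^d$; in each round $t=1,\dots,T$ the reconstructor (possibly adaptively) chooses $v_t\in S^{d-1}$ and receives $r_t\in\mathbb{R}$ with $|r_t-\langle x^*,v_t\rangle|\le\delta$. After $T$ rounds the reconstructor outputs a function $\hat G_T:S^{d-1}\to\mathbb{R}$. All strategies are deterministic. $\mathrm{OPT}^{\mathrm{improper}}_d(T,\delta)=\inf_{\mathcal R}\sup_{x^*}\sup_{\mathcal A}\sup_{v\in S^{d-1}}|\hat G_T(v)-\langle x^*,v\rangle|$, the infimum over improper reconstructor strategies and the suprema over secrets and adversary answer strategies consistent with the secret. The feasible region is $\Phi_T=\{x\in\mathbb{R}^d: |\langle x,v_t\rangle-r_t|\le\delta\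 \forall t\in[T]\}$; $\mathrm{diam}(A)=\sup_{x,y\in A}\|x-y\|_2$. *)

(* Defs.v *)
From HB Require Import structures.
From mathcomp Require Import all_boot all_order all_algebra.
From mathcomp Require Import all_classical all_reals ereal.
Set Implicit Arguments. Unset Strict Implicit. Unset Printing Implicit Defensive.
Import Order.TTheory GRing.Theory Num.Theory.
Local Open Scope classical_set_scope.
Local Open Scope ring_scope.

Section Defs.
Variables (R : realType) (d : nat).

Definition dotp (x y : 'rV[R]_d) : R := \sum_(i < d) x ord0 i * y ord0 i.
Definition norm2 (x : 'rV[R]_d) : R := Num.sqrt (dotp x x).
Definition sphere : set 'rV[R]_d := [set v | norm2 v = 1].

(* a transcript is a sequence of (query, answer) pairs *)
Definition transcript := seq ('rV[R]_d * R).

Definition feasible (delta : R) (h : transcript) : set 'rV[R]_d :=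
  [set x | forall p, p \in h -> `|dotp x p.1 - p.2| <= delta].

Definition bounded_set (A : set 'rV[R]_d) : Prop :=
  exists M : R, forall x, A x -> norm2 x <= M.

Definition diam (A : set 'rV[R]_d) : \bar R :=
  ereal_sup [set e | exists x y, A x /\ A y /\ e = (norm2 (x - y))%:E].

Definition worst_err (A : set 'rV[R]_d) (G : 'rV[R]_d -> R) : \bar R :=
  ereal_sup [set e | exists x v, A x /\ sphere v /\ e = (`|G v - dotp x v|)%:E].

Definition midpoint_rule (A : set 'rV[R]_d) (v : 'rV[R]_d) : R :=
  (sup [set dotp x v | x in A] + inf [set dotp x v | x in A]) / 2.

(* deterministic adaptive improper reconstructor: next query as a function of
   the history, and the final output as a function of the full transcript *)
Record reconstructor := Reconstructor {
  rquery : transcript -> 'rV[R]_d;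
  routput : transcript -> ('rV[R]_d -> R) }.

Definition valid_reconstructor (Rc : reconstructor) : Prop :=
  forall h, sphere (rquery Rc h).

(* deterministic adversary: answer as a function of the history and the
   current query *)
Definition adversary := transcript -> 'rV[R]_d -> R.

Fixpoint play (Rc : reconstructor) (A : adversary) (k : nat) : transcript :=
  match k with
  | 0 => [::]
  | k'.+1 => let h := play Rc A k' in
             let v := rquery Rc h in rcons h (v, A h v)
  end.

Definition consistent_adv (delta : R) (xs : 'rV[R]_d) (Rc : reconstructor)
  (A : adversary) (T : nat) : Prop :=
  forall p, p \in play Rc A T -> `|p.2 - dotp xs p.1| <= delta.

Definition rec_error (T : nat) (delta : R) (Rc : reconstructor) : \bar R :=
  ereal_sup [set e | exists xs A v, consistent_adv delta xs Rc A T /\ sphere v /\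
     e = (`|routput Rc (play Rc A T) v - dotp xs v|)%:E].

Definition OPT_improper (T : nat) (delta : R) : \bar R :=
  ereal_inf [set e | exists Rc, valid_reconstructor Rc /\ e = rec_error T delta Rc].

Definition half_diam_value (T : nat) (delta : R) : \bar R :=
  ereal_inf [set e | exists Rc, valid_reconstructor Rc /\
    e = ereal_sup [set f | exists A : adversary,
          feasible delta (play Rc A T) !=set0 /\
          f = ((2%:R)^-1%:E * diam (feasible delta (play Rc A T)))%E]].

End Defs.

Arguments dotp {R d}.
Arguments norm2 {R d}.
Arguments sphere {R d}.
Arguments feasible {R d}.
Arguments bounded_set {R d}.
Arguments diam {R d}.
Arguments worst_err {R d}.
Arguments midpoint_rule {R d}.
Arguments OPT_improper {R} d.
Arguments half_diam_value {R} d.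

(* Main.v *)
Require Import Defs.
From HB Require Import structures.
From mathcomp Require Import all_boot all_order all_algebra.
From mathcomp Require Import all_classical all_reals ereal.
From mathcomp Require Import ring lra.
Import Order.TTheory GRing.Theory Num.Theory.
Local Open Scope classical_set_scope.
Local Open Scope ring_scope.

Section Aux.
Variables (R : realType) (d : nat).
Implicit Types x y z u w : 'rV[R]_d.

Lemma dotpC x y : dotp x y = dotp y x.
Proof. by apply: eq_bigr => i _; rewrite mulrC. Qed.

Lemma dotpBl x y z : dotp (x - y) z = dotp x z - dotp y z.
Proof. rewrite /dotp -sumrB; apply: eq_bigr => i _; rewrite !mxE; ring. Qed.

Lemma dotpZl a x z : dotp (a *: x) z = a * dotp x z.
Proof. rewrite /dotp mulr_sumr; apply: eq_bigr => i _; rewrite !mxE; ring. Qed.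

Lemma dotp_ge0 x : 0 <= dotp x x.
Proof. by apply: sumr_ge0 => i _; rewrite -expr2 sqr_ge0. Qed.

Lemma norm2_ge0 x : 0 <= norm2 x.
Proof. exact: sqrtr_ge0. Qed.

Lemma sqr_norm2 x : norm2 x ^+ 2 = dotp x x.
Proof. by rewrite sqr_sqrtr // dotp_ge0. Qed.

Lemma sphere_dotp u : sphere u -> dotp u u = 1.
Proof. by move=> su; rewrite -sqr_norm2 su expr1n. Qed.

Lemma cs_unit z u : sphere u -> `|dotp z u| <= norm2 z.
Proof.
move=> su; set t := dotp z u.
have h : 0 <= dotp (z - t *: u) (z - t *: u) by apply: dotp_ge0.
rewrite dotpBl dotpZl !(dotpC _ (z - t *: u)) !dotpBl !dotpZl (sphere_dotp _ su)
  (dotpC u z) -/t in h.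
rewrite -sqrtr_sqr /norm2 ler_sqrt ?dotp_ge0 //; lra.
Qed.

Lemma normalize w : 0 < norm2 w ->
  sphere ((norm2 w)^-1 *: w) /\ dotp w ((norm2 w)^-1 *: w) = norm2 w.
Proof.
move=> wp; have D0 : dotp w w = norm2 w ^+ 2 by rewrite sqr_norm2.
have nw0 : norm2 w != 0 by rewrite gt_eqF.
split.
  rewrite /sphere /= [LHS]/norm2 dotpZl dotpC dotpZl D0.
  by rewrite mulrA -expr2 exprVn mulrC mulfV ?sqrtr1 // expf_neq0.
by rewrite dotpC dotpZl D0 expr2 mulrA mulVf ?mul1r.
Qed.

Lemma sphere_exists : (0 < d)%N -> exists v : 'rV[R]_d, sphere v.
Proof.
move=> d0; pose w : 'rV[R]_d := const_mx 1.
have hw : dotp w w = d%:R.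
  rewrite /dotp (eq_bigr (fun _ => 1)) ?sumr_const ?card_ord //.
  by move=> i _; rewrite !mxE mulr1.
have : 0 < norm2 w by rewrite sqrtr_gt0 hw ltr0n.
by move/normalize=> [s _]; eexists; exact: s.
Qed.


Local Open Scope ereal_scope.

Lemma lower_pair (A : set 'rV[R]_d) G x y : (0 < d)%N -> A x -> A y ->
  ((2^-1 * norm2 (x - y))%R%:E <= worst_err A G).
Proof.
move=> d0 Ax Ay.
case: (eqVneq (norm2 (x - y)) 0%R) => [->|nz].
  have [v sv] := sphere_exists d0.
  rewrite mulr0; apply: (@le_trans _ _ (`|G v - dotp x v|)%R%:E).
    by rewrite lee_fin.
  by apply: ereal_sup_ubound; exists x, v.
have np : (0 < norm2 (x - y))%R by rewrite lt_def nz norm2_ge0.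
have [sv hv] := normalize _ np.
set v := (_ *: _) in sv hv.
have ha : (`|G v - dotp x v|)%R%:E <= worst_err A G.
  by apply: ereal_sup_ubound; exists x, v.
have hb : (`|G v - dotp y v|)%R%:E <= worst_err A G.
  by apply: ereal_sup_ubound; exists y, v.
rewrite dotpBl in hv.
have p1 := ler_norm (G v - dotp y v).
have p2 := ler_norm (- (G v - dotp x v)); rewrite normrN in p2.
case: (leP (`|G v - dotp x v|)%R (`|G v - dotp y v|)%R) => hab.
  apply: le_trans hb; rewrite lee_fin; lra.
apply: le_trans ha; rewrite lee_fin; lra.
Qed.

Lemma diam_lower (A : set 'rV[R]_d) G : (0 < d)%N ->
  (2^-1)%R%:E * diam A <= worst_err A G.
Proof.
move=> d0.
have h : diam A <= 2%:E * worst_err A G.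
  apply: ge_ereal_sup => e [x [y [Ax [Ay ->]]]].
  have := lee_wpmul2l (x := 2%:E) _ (lower_pair _ G _ _ d0 Ax Ay).
  rewrite -EFinM mulrA mulfV ?mul1r; last by rewrite pnatr_eq0.
  by apply; rewrite lee_fin.
have := lee_wpmul2l (x := (2^-1)%R%:E) _ h.
rewrite muleA -EFinM mulVf ?mul1e; last by rewrite pnatr_eq0.
by apply; rewrite lee_fin invr_ge0.
Qed.

Lemma diam_ge0 (A : set 'rV[R]_d) x0 : A x0 -> 0 <= diam A.
Proof.
move=> Ax0; apply: (@le_trans _ _ (norm2 (x0 - x0))%:E).
  by rewrite lee_fin norm2_ge0.
by apply: ereal_sup_ubound; exists x0, x0.
Qed.

Lemma unbounded_diam (A : set 'rV[R]_d) x0 : A x0 -> ~ bounded_set A ->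
  diam A = +oo.
Proof.
move=> Ax0 nb.
have H : forall r : R, r%:E <= diam A.
  move=> r; pose M := (`|r| + norm2 x0 + 1)%R.
  have [x [Ax nx]] : exists x, A x /\ (M < norm2 x)%R.
    apply: contrapT => hn; apply: nb; exists M => x Ax.
    rewrite leNgt; apply/negP => h; apply: hn; by exists x.
  have n0 := norm2_ge0 x0.
  have r0 := ler_norm r.
  have np : (0 < norm2 x)%R.
    apply: le_lt_trans nx; rewrite /M; have := normr_ge0 r; lra.
  have [su hu] := normalize _ np.
  set u := (_ *: _) in su hu.
  have c1 := cs_unit (x - x0) _ su.
  have c2 := cs_unit x0 _ su.
  rewrite dotpBl hu in c1.
  have l1 := ler_norm (norm2 x - dotp x0 u).
  have l2 := ler_norm (dotp x0 u).
  apply: (@le_trans _ _ (norm2 (x - x0))%:E).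
    rewrite lee_fin; rewrite /M in nx; lra.
  by apply: ereal_sup_ubound; exists x, x0.
case Dd : (diam A) => [r| |] //.
  have := H (r + 1)%R; rewrite Dd lee_fin => h.
  have : (r < r + 1)%R by rewrite ltrDl ltr01.
  by rewrite ltNge h.
by have := H 0%R; rewrite Dd leeNy_eq.
Qed.


Lemma mid_upper_bdd (A : set 'rV[R]_d) x0 : A x0 -> bounded_set A ->
  worst_err A (midpoint_rule A) <= (2^-1)%R%:E * diam A.
Proof.
move=> Ax0 [M hM].
apply: ge_ereal_sup => e [x [v [Ax [sv ->]]]].
set S := [set dotp z v | z in A].
have bS : forall z, A z -> (`|dotp z v| <= M)%R.
  by move=> z Az; apply: le_trans (cs_unit z _ sv) (hM _ Az).
have S0 : S !=set0 by exists (dotp x0 v), x0.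
have hub : has_ubound S.
  by exists M => _ [z Az <-]; apply: le_trans (ler_norm _) (bS _ Az).
have hlb : has_lbound S.
  exists (- M)%R => _ [z Az <-]; rewrite lerNl.
  by apply: le_trans (ler_norm _) _; rewrite normrN bS.
have xs : (dotp x v <= sup S)%R by apply: ub_le_sup => //; exists x.
have xi : (inf S <= dotp x v)%R by apply: ge_inf => //; exists x.
rewrite /midpoint_rule -/S.
case Dd : (diam A) => [r| |].
- have hyz : forall y z, A y -> A z -> (dotp y v - dotp z v <= r)%R.
    move=> y z Ay Az.
    have : (norm2 (y - z))%:E <= diam A.
      by apply: ereal_sup_ubound; exists y, z.
    rewrite Dd lee_fin; apply: le_trans.
    rewrite -dotpBl; apply: le_trans (ler_norm _) (cs_unit _ _ sv).
  have hsi : (sup S - r <= inf S)%R.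
    apply: lb_le_inf => // _ [z Az <-].
    rewrite lerBlDr; apply: ge_sup => // _ [y Ay <-].
    have := hyz y z Ay Az; lra.
  rewrite -EFinM lee_fin ler_norml; apply/andP; split; lra.
- by rewrite muleC gt0_mulye ?leey // lte_fin invr_gt0.
- have := diam_ge0 _ _ Ax0; by rewrite Dd.
Qed.

Lemma mid_upper (A : set 'rV[R]_d) x0 : A x0 ->
  worst_err A (midpoint_rule A) <= (2^-1)%R%:E * diam A.
Proof.
move=> Ax0; case: (pselect (bounded_set A)) => hb.
  exact: mid_upper_bdd _ _ Ax0 hb.
by rewrite (unbounded_diam _ _ Ax0 hb) muleC gt0_mulye ?leey // lte_fin invr_gt0.
Qed.

End Aux.
Arguments diam_lower {R d}.
Arguments mid_upper {R d}.
Arguments mid_upper_bdd {R d}.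

Section Game.
Variables (R : realType) (d T : nat) (delta : R).
Local Open Scope ereal_scope.

Lemma play_eq (Rc1 Rc2 : reconstructor R d) (A : adversary R d) k :
  rquery Rc1 = rquery Rc2 -> play Rc1 A k = play Rc2 A k.
Proof. by move=> hq; elim: k => //= k IH; rewrite IH hq. Qed.

Lemma cons_feas xs (Rc : reconstructor R d) A :
  consistent_adv delta xs Rc A T -> feasible delta (play Rc A T) xs.
Proof. by move=> c p hp; rewrite distrC; apply: c. Qed.

Lemma feas_cons xs (Rc : reconstructor R d) A :
  feasible delta (play Rc A T) xs -> consistent_adv delta xs Rc A T.
Proof. by move=> c p hp; rewrite distrC; apply: c. Qed.

Definition hs (Rc : reconstructor R d) : \bar R :=
  ereal_sup [set f | exists A : adversary R d,
          feasible delta (play Rc A T) !=set0 /\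
          f = ((2%:R)^-1%:E * diam (feasible delta (play Rc A T)))%E].

Lemma rec_ge (Rc : reconstructor R d) : (0 < d)%N -> hs Rc <= rec_error T delta Rc.
Proof.
move=> d0; apply: ge_ereal_sup => f [A [[x0 Hx0] ->]].
apply: le_trans (diam_lower _ (routput Rc (play Rc A T)) d0) _.
apply: ge_ereal_sup => e [x [v [Ax [sv ->]]]].
apply: ereal_sup_ubound; exists x, A, v; split; last by split.
exact: feas_cons.
Qed.

Definition midrec (Rc : reconstructor R d) : reconstructor R d :=
  Reconstructor (rquery Rc) (fun h => midpoint_rule (feasible delta h)).

Lemma rec_mid (Rc : reconstructor R d) : rec_error T delta (midrec Rc) <= hs Rc.
Proof.
apply: ge_ereal_sup => e [xs [A [v [c [sv ->]]]]].
have Ax := cons_feas _ _ _ c.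
rewrite /= (play_eq _ Rc) // in Ax *.
apply: (@le_trans _ _ (worst_err (feasible delta (play Rc A T))
   (midpoint_rule (feasible delta (play Rc A T))))).
  by apply: ereal_sup_ubound; exists xs, v.
apply: le_trans (mid_upper _ _ Ax) _.
by apply: ereal_sup_ubound; exists A; split => //; exists xs.
Qed.

End Game.
Arguments rec_mid {R d}.
Arguments rec_ge {R d}.
Arguments midrec {R d}.

Theorem mainTheorem18 (R : realType) (d T : nat) (delta : R) :
  (1 <= d)%N -> 0 < delta ->
  (forall h : transcript R d,
     size h = T ->
     (forall p, p \in h -> sphere p.1) ->
     feasible delta h !=set0 ->
     bounded_set (feasible delta h) ->
     (forall G : 'rV[R]_d -> R,
        ((2%:R)^-1%:E * diam (feasible delta h) <= worst_err (feasible delta h) G)%E) /\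
     worst_err (feasible delta h) (midpoint_rule (feasible delta h))
       = ((2%:R)^-1%:E * diam (feasible delta h))%E) /\
  OPT_improper d T delta = half_diam_value d T delta.
Proof.
move=> d1 _; split.
  move=> h _ _ [x0 hx0] hb; split.
    by move=> G; apply: diam_lower.
  apply/eqP; rewrite eq_le; apply/andP; split.
    exact: mid_upper_bdd hx0 hb.
  exact: diam_lower.
apply/eqP; rewrite eq_le; apply/andP; split.
  apply: le_ereal_inf_tmp => e [Rc [vRc ->]].
  apply: le_trans (rec_mid T delta Rc).
  by apply: ereal_inf_lbound; exists (midrec delta Rc).
apply: le_ereal_inf_tmp => e [Rc [vRc ->]].
apply: le_trans (rec_ge T delta Rc d1).
by apply: ereal_inf_lbound; exists Rc.
Qed.
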